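(* Let $(X,\tau_1,\tau_2)$ be a bitopological space which is $(i,j)$-almost regular and a $j$-$P$-space, where $i,j\in\{1,2\}$, $i\neq j$. Then $X$ is $(i,j)_1$-nearly paralindelöf if and only if every cover of $X$ by $(i,j)$-regular open sets has a refinement which is a cover of $X$ by $(i,j)$-regular open sets and is $j$-locally countable.
   Context: $(X,\tau_1,\tau_2)$ is a bitopological space and $i,j\in\{1,2\}$, $i\neq j$. For $k\in\{1,2\}$ and $A\subseteq X$, $k\text{-}\mathrm{int}(A)$ and $k\text{-}\mathrm{cl}(A)$ denote interior and closure with respect to $\tau_k$; ''$k$-open''/''$k$-closed'' mean $\tau_k$-open/$\tau_k$-closed. A set $A$ is $(i,j)$-regular open if $A=i\text{-}\mathrm{int}(j\text{-}\mathrm{cl}(A))$. A family $\mathcal V$ refines a family $\mathcal U$ if every member of $\mathcal V$ is contained in some member of $\mathcal U$; a family is a cover of $X$ if its union is $X$. A family $\mathcal V$ is $k$-locally countable if every $x\in X$ has a $k$-open neighbourhood meeting at most countably many members of $\mathcal V$. $X$ is a $k$-$P$-space if every intersection of countably many $k$-open sets is $k$-open. $X$ is $(i,j)$-almost regular if for each $x\in X$ and each $(i,j)$-regular open set $U$ containing $x$ there is an $(i,j)$-regular open set $V$ with $x\in V\subseteq j\text{-}\mathrm{cl}(V)\subseteq U$. $X$ is $(i,j)_1$-nearly paralindelöf if every cover of $X$ by $(i,j)$-regular open sets has a refinement which is a cover of $X$ by $i$-open sets and which is $j$-locally countable. *)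

(* Defs.v *)
From Stdlib Require Import Classical FunctionalExtensionality PropExtensionality.

Definition set (X : Type) := X -> Prop.
Definition subset {X} (A B : set X) := forall x, A x -> B x.

Record topology (X : Type) := Topology {
  is_open : set X -> Prop;
  open_full : is_open (fun _ => True);
  open_empty : is_open (fun _ => False);
  open_inter : forall A B, is_open A -> is_open B ->
                 is_open (fun x => A x /\ B x);
  open_union : forall (F : set X -> Prop), (forall U, F U -> is_open U) ->
                 is_open (fun x => exists U, F U /\ U x)
}.
Arguments is_open {X} _ _.

Definition is_closed {X} (t : topology X) (A : set X) :=
  is_open t (fun x => ~ A x).

Definition interior {X} (t : topology X) (A : set X) : set X :=
  fun x => exists U, is_open t U /\ subset U A /\ U x.

Definition closure {X} (t : topology X) (A : set X) : set X :=
  fun x => forall U, is_open t U -> U x -> exists y, U y /\ A y.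

Inductive idx := I1 | I2.

Definition top {X} (t1 t2 : topology X) (k : idx) : topology X :=
  match k with I1 => t1 | I2 => t2 end.

Definition regular_open {X} (ti tj : topology X) (A : set X) :=
  A = interior ti (closure tj A).

Definition family X := set X -> Prop.

Definition is_cover {X} (F : family X) :=
  forall x, exists U, F U /\ U x.

Definition refines {X} (V U : family X) :=
  forall A, V A -> exists B, U B /\ subset A B.

(* a family of sets is countable: enumerated (possibly with repetitions) by nat *)
Definition countable_family {X} (F : family X) :=
  exists f : nat -> set X, forall A, F A -> exists n, f n = A.

Definition meets {X} (A B : set X) := exists x, A x /\ B x.

Definition locally_countable {X} (t : topology X) (V : family X) :=
  forall x, exists N, is_open t N /\ N x /\
    countable_family (fun A => V A /\ meets N A).

Definition P_space {X} (t : topology X) :=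
  forall G : nat -> set X, (forall n, is_open t (G n)) ->
    is_open t (fun x => forall n, G n x).

Definition almost_regular {X} (ti tj : topology X) :=
  forall x U, regular_open ti tj U -> U x ->
    exists V, regular_open ti tj V /\ V x /\ subset (closure tj V) U.

Definition nearly_paralindelof1 {X} (ti tj : topology X) :=
  forall U : family X, (forall A, U A -> regular_open ti tj A) -> is_cover U ->
    exists V : family X, refines V U /\ is_cover V /\
      (forall A, V A -> is_open ti A) /\ locally_countable tj V.

(* Main.v *)
Require Import Defs.
From Stdlib Require Import Classical FunctionalExtensionality PropExtensionality.

Lemma interior_open {X} (t : topology X) (A : set X) : is_open t (interior t A).
Proof.
  assert (E : interior t A = (fun x => exists U, (fun U => is_open t U /\ subset U A) U /\ U x)).
  { apply functional_extensionality; intro x; apply propositional_extensionality.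
    unfold interior; split; intros [U H]; exists U; tauto. }
  rewrite E. apply open_union. intros U [H _]; exact H.
Qed.

Lemma cl_sub {X} (t : topology X) (A : set X) : subset A (closure t A).
Proof. intros x Ax U _ Ux. exists x; auto. Qed.

Lemma cl_mono {X} (t : topology X) (A B : set X) : subset A B -> subset (closure t A) (closure t B).
Proof. intros H x Hx U HU Ux. destruct (Hx U HU Ux) as [y [? ?]]. exists y; auto. Qed.

Lemma ro_int {X} (ti tj : topology X) (A : set X) :
  regular_open ti tj (interior ti (closure tj A)).
Proof.
  unfold regular_open. set (B := interior ti (closure tj A)).
  apply functional_extensionality; intro x; apply propositional_extensionality.
  split.
  - intro Bx. exists B. split; [apply interior_open|]. split; [apply cl_sub| exact Bx].
  - intros [O [HO [Hs Ox]]]. exists O. split; [exact HO|]. split; [|exact Ox].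
    intros y Oy. specialize (Hs y Oy). intros U HU Uy.
    destruct (Hs U HU Uy) as [z [Uz Bz]].
    destruct Bz as [O' [HO' [Hs' O'z]]].
    exact (Hs' z O'z U HU Uz).
Qed.

Lemma open_sub_int {X} (ti tj : topology X) (W : set X) :
  is_open ti W -> subset W (interior ti (closure tj W)).
Proof. intros HW x Wx. exists W. repeat split; auto. apply cl_sub. Qed.

Lemma gen {X} (ti tj : topology X) :
  almost_regular ti tj ->
  (nearly_paralindelof1 ti tj <->
   forall U : family X,
     (forall A, U A -> regular_open ti tj A) ->
     is_cover U ->
     exists V : family X, refines V U /\ is_cover V /\
       (forall A, V A -> regular_open ti tj A) /\
       locally_countable tj V).
Proof.
  intros AR. split.
  - intros NP U HU CU.
    set (VF := fun V : set X => regular_open ti tj V /\ exists B, U B /\ subset (closure tj V) B).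
    destruct (NP VF) as [W [RW [CW [OW LW]]]].
    + intros A [H _]; exact H.
    + intro x. destruct (CU x) as [B [UB Bx]].
      destruct (AR x B (HU B UB) Bx) as [V [RV [Vx SV]]].
      exists V. split; [|exact Vx]. split; [exact RV|]. exists B; auto.
    + set (R := fun A : set X => exists Wf, W Wf /\ A = interior ti (closure tj Wf)).
      exists R. split; [|split; [|split]].
      * intros A [Wf [HW ->]].
        destruct (RW Wf HW) as [V [[_ [B [UB SB]]] SWV]].
        exists B. split; [exact UB|].
        intros y [O [_ [Hs Oy]]]. apply SB. apply (cl_mono tj Wf V SWV). apply Hs; exact Oy.
      * intro x. destruct (CW x) as [Wf [HW Wx]].
        exists (interior ti (closure tj Wf)). split.
        -- exists Wf; auto.
        -- apply open_sub_int; auto.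
      * intros A [Wf [_ ->]]. apply ro_int.
      * intro x. destruct (LW x) as [N [HN [Nx [f Hf]]]].
        exists N. split; [exact HN|]. split; [exact Nx|].
        exists (fun n => interior ti (closure tj (f n))).
        intros A [[Wf [HW ->]] [y [Ny Ay]]].
        destruct Ay as [O [_ [Hs Oy]]].
        destruct (Hs y Oy N HN Ny) as [z [Nz Wz]].
        destruct (Hf Wf (conj HW (ex_intro _ z (conj Nz Wz)))) as [n Hn].
        exists n. rewrite Hn. reflexivity.
  - intros H U HU CU. destruct (H U HU CU) as [V [RV [CV [RoV LV]]]].
    exists V. split; [exact RV|]. split; [exact CV|]. split; [|exact LV].
    intros A VA. rewrite (RoV A VA). apply interior_open.
Qed.

Theorem mainTheorem3 (X : Type) (t1 t2 : topology X) (i j : idx) :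
  i <> j ->
  almost_regular (top t1 t2 i) (top t1 t2 j) ->
  P_space (top t1 t2 j) ->
  (nearly_paralindelof1 (top t1 t2 i) (top t1 t2 j) <->
   forall U : family X,
     (forall A, U A -> regular_open (top t1 t2 i) (top t1 t2 j) A) ->
     is_cover U ->
     exists V : family X, refines V U /\ is_cover V /\
       (forall A, V A -> regular_open (top t1 t2 i) (top t1 t2 j) A) /\
       locally_countable (top t1 t2 j) V).
Proof.
  intros _ AR _. apply gen; exact AR.
Qed.
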